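(* Let $G=([n],E)$ be any graph, $F$ the uniform distribution on $[0,1]$, and $p\in(0,1)$. Let $X\subseteq[0,1]^n$ be the set of vectors $\mathbf{x}$ such that for every $i$: $\sum_{j\in N(i)\cup\{i\}}x_j\ge1$, and $\sum_{j\in N(i)\cup\{i\}}x_j>1$ implies $x_i=0$. Then $$p(1-p)\min_{\mathbf{x}\in X}\sum_i x_i\ \le\ \inf_{\mathbf{T}\in\mathcal{N}_{p\cdot\mathbf{1}}}\mathcal{R}(p\cdot\mathbf{1},\mathbf{T})\ \le\ p\log(1/p)\min_{\mathbf{x}\in X}\sum_ix_i.$$
   Context: Public-goods pricing game: $n$ buyers are the vertices of an undirected graph $G=([n],E)$; $N(i)=\{j:(i,j)\in E\}$ (so $i\notin N(i)$). Values i.i.d. uniform on $[0,1]$, $F(x)=\min\{1,x\}$ for $x\ge0$, $F(\infty)=1$. An equilibrium for price vector $\mathbf{p}$ is $\mathbf{T}\in[0,\infty]^n$ (buyer $i$ purchases iff $v_i\ge T_i$) with $T_i=p_i/\prod_{j\in N(i)}F(T_j)$ for all $i$ (convention $c/0=\infty$); $\mathcal{N}_{\mathbf{p}}$ is the set of equilibria; $\mathcal{R}(\mathbf{p},\mathbf{T})=\sum_ip_i(1-F(T_i))$; $p\cdot\mathbf{1}$ is the uniform price vector; $\log$ is the natural logarithm. *)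

(* Defs.v *)
From Stdlib Require Import Reals Lra.
Open Scope R_scope.

Fixpoint Rsum (n : nat) (f : nat -> R) : R :=
  match n with O => 0 | S k => Rsum k f + f k end.

Fixpoint Rprod_if (n : nat) (P : nat -> bool) (f : nat -> R) : R :=
  match n with
  | O => 1
  | S k => Rprod_if k P f * (if P k then f k else 1)
  end.

(* Simple undirected graph on vertex set [n] = {0,...,n-1}, given by a
   boolean adjacency relation; N(i) = {j < n | adj i j}. *)
Definition simple_graph (n : nat) (adj : nat -> nat -> bool) : Prop :=
  (forall i j, (i < n)%nat -> (j < n)%nat -> adj i j = adj j i) /\
  (forall i, (i < n)%nat -> adj i i = false).

Inductive ext : Type := Fin (r : R) | Inf.

Definition Fu (r : R) : R := Rmax 0 (Rmin 1 r).
Definition Fext (t : ext) : R :=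
  match t with Fin r => Fu r | Inf => 1 end.

Definition nonneg_ext (t : ext) : Prop :=
  match t with Fin r => 0 <= r | Inf => True end.

(* T is an equilibrium for price vector p: T in [0,inf]^n and
   T_i = p_i / prod_{j in N(i)} F(T_j), with c/0 = infinity. *)
Definition is_equilibrium (n : nat) (adj : nat -> nat -> bool)
    (p : nat -> R) (T : nat -> ext) : Prop :=
  forall i, (i < n)%nat ->
    nonneg_ext (T i) /\
    let d := Rprod_if n (adj i) (fun j => Fext (T j)) in
    ((d = 0 /\ T i = Inf) \/ (d <> 0 /\ T i = Fin (p i / d))).

Definition revenue (n : nat) (p : nat -> R) (T : nat -> ext) : R :=
  Rsum n (fun i => p i * (1 - Fext (T i))).

Definition closed_nbhd_sum (n : nat) (adj : nat -> nat -> bool)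
    (x : nat -> R) (i : nat) : R :=
  Rsum n (fun j => if orb (adj i j) (Nat.eqb j i) then x j else 0).

Definition in_X (n : nat) (adj : nat -> nat -> bool) (x : nat -> R) : Prop :=
  forall i, (i < n)%nat ->
    0 <= x i <= 1 /\
    closed_nbhd_sum n adj x i >= 1 /\
    (closed_nbhd_sum n adj x i > 1 -> x i = 0).

(* Main.v *)
Require Import Defs.
From Stdlib Require Import Reals Lra Lia.
Open Scope R_scope.

Lemma Rsum_ext n f g : (forall j, (j < n)%nat -> f j = g j) -> Rsum n f = Rsum n g.
Proof.
  induction n; intros H; simpl; auto.
  rewrite IHn by (intros; apply H; lia). rewrite (H n) by lia. reflexivity.
Qed.

Lemma Rsum_le n f g : (forall j, (j < n)%nat -> f j <= g j) -> Rsum n f <= Rsum n g.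
Proof.
  induction n; intros H; simpl; [lra|].
  assert (Rsum n f <= Rsum n g) by (apply IHn; intros; apply H; lia).
  assert (f n <= g n) by (apply H; lia). lra.
Qed.

Lemma Rsum_scal n c f : Rsum n (fun j => c * f j) = c * Rsum n f.
Proof. induction n; simpl; [ring|]. rewrite IHn. ring. Qed.

Lemma Rsum_nonneg n f : (forall j, (j < n)%nat -> 0 <= f j) -> 0 <= Rsum n f.
Proof.
  intros H. apply Rle_trans with (Rsum n (fun _ => 0)).
  - clear H. induction n; simpl; lra.
  - apply Rsum_le. auto.
Qed.

Lemma Rsum_ge_term n f l : (forall j, (j < n)%nat -> 0 <= f j) -> (l < n)%nat -> f l <= Rsum n f.
Proof.
  induction n; intros H Hl; [lia|]. simpl.
  destruct (Nat.eq_dec l n) as [->|Hne].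
  - assert (0 <= Rsum n f) by (apply Rsum_nonneg; intros; apply H; lia). lra.
  - assert (f l <= Rsum n f) by (apply IHn; [intros; apply H; lia|lia]).
    assert (0 <= f n) by (apply H; lia). lra.
Qed.

Lemma Rprod_ext n P f h : (forall j, (j < n)%nat -> f j = h j) -> Rprod_if n P f = Rprod_if n P h.
Proof.
  induction n; intros H; simpl; auto.
  rewrite IHn by (intros; apply H; lia). rewrite (H n) by lia. reflexivity.
Qed.

Lemma Rprod_exp n P g :
  Rprod_if n P (fun j => exp (g j)) = exp (Rsum n (fun j => if P j then g j else 0)).
Proof.
  induction n; simpl. { rewrite exp_0; reflexivity. }
  rewrite IHn, exp_plus. destruct (P n); [reflexivity|rewrite exp_0; ring].
Qed.

Lemma Rprod_bounds n P f : (forall j, (j < n)%nat -> 0 <= f j <= 1) ->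
  0 <= Rprod_if n P f <= 1.
Proof.
  induction n; intros H; simpl; [lra|].
  assert (0 <= Rprod_if n P f <= 1) by (apply IHn; intros; apply H; lia).
  assert (0 <= (if P n then f n else 1) <= 1) by (destruct (P n); [apply H; lia|lra]).
  nra.
Qed.

Lemma Rprod_pos n P f : (forall j, (j < n)%nat -> 0 < f j) -> 0 < Rprod_if n P f.
Proof.
  induction n; intros H; simpl; [lra|].
  assert (0 < Rprod_if n P f) by (apply IHn; intros; apply H; lia).
  assert (0 < (if P n then f n else 1)) by (destruct (P n); [apply H; lia|lra]).
  nra.
Qed.

Definition nsum (n : nat) (adj : nat -> nat -> bool) (x : nat -> R) (i : nat) : R :=
  Rsum n (fun j => if adj i j then x j else 0).

Lemma cns_split_gen adj x i m : adj i i = false ->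
  Rsum m (fun j => if orb (adj i j) (Nat.eqb j i) then x j else 0) =
  (if Nat.ltb i m then x i else 0) + Rsum m (fun j => if adj i j then x j else 0).
Proof.
  intros Hii. induction m; simpl. { destruct (Nat.ltb i 0) eqn:E; [apply Nat.ltb_lt in E; lia|ring]. }
  rewrite IHm.
  destruct (Nat.eqb_spec m i) as [->|Hne].
  - rewrite Hii. simpl.
    destruct (Nat.ltb_spec i i); [lia|]. destruct (Nat.ltb_spec i (S i)); [|lia]. ring.
  - rewrite Bool.orb_false_r.
    destruct (Nat.ltb_spec i m); destruct (Nat.ltb_spec i (S m)); try lia; ring.
Qed.

Lemma cns_split n adj x i : adj i i = false -> (i < n)%nat ->
  closed_nbhd_sum n adj x i = x i + nsum n adj x i.
Proof.
  intros Hii Hi. unfold closed_nbhd_sum, nsum. rewrite cns_split_gen by auto.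
  destruct (Nat.ltb_spec i n); [reflexivity|lia].
Qed.

Lemma nsum_nonneg n adj x i : (forall j, (j < n)%nat -> 0 <= x j) -> 0 <= nsum n adj x i.
Proof. intros H; apply Rsum_nonneg; intros j Hj; destruct (adj i j); auto; lra. Qed.

Lemma ln_le_sub1 y : 0 < y -> ln y <= y - 1.
Proof. intros Hy. pose proof (exp_ineq1_le (ln y)). rewrite exp_ln in H by auto. lra. Qed.

Lemma chord t L : 0 <= t <= 1 -> exp (t * L) <= 1 - t + t * exp L.
Proof.
  intros Ht. set (E := exp L). assert (HE : 0 < E) by apply exp_pos.
  set (m := 1 - t + t * E).
  assert (Hm : 0 < m).
  { unfold m. destruct (Rle_lt_dec 1 t). - assert (t = 1) by lra. rewrite H. lra. - assert (0 <= t * E) by (apply Rmult_le_pos; lra). lra. }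
  assert (H1 : ln (E * / m) <= E * / m - 1) by (apply ln_le_sub1; apply Rmult_lt_0_compat; [auto|apply Rinv_0_lt_compat; auto]).
  assert (H2 : ln (/ m) <= / m - 1) by (apply ln_le_sub1; apply Rinv_0_lt_compat; auto).
  rewrite ln_mult in H1 by (auto; apply Rinv_0_lt_compat; auto).
  rewrite ln_Rinv in H1, H2 by auto.
  unfold E in H1 at 1. rewrite ln_exp in H1.
  assert (H3 : t * (L + - ln m) <= t * (E * / m - 1)) by (apply Rmult_le_compat_l; lra).
  assert (H4 : (1 - t) * (- ln m) <= (1 - t) * (/ m - 1)) by (apply Rmult_le_compat_l; lra).
  assert (Hid : t * (E * / m - 1) + (1 - t) * (/ m - 1) = 0).
  { unfold m in *. field. lra. }
  assert (t * L <= ln m) by lra.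
  apply Rle_trans with (exp (ln m)).
  - destruct (Req_dec (t*L) (ln m)) as [->|]; [lra|]. left; apply exp_increasing; lra.
  - rewrite exp_ln by auto. unfold m, E. lra.
Qed.


Fixpoint existsb_lt (k : nat) (f : nat -> bool) : bool :=
  match k with O => false | S k' => orb (existsb_lt k' f) (f k') end.

Lemma existsb_lt_spec k f : existsb_lt k f = true <-> exists l, (l < k)%nat /\ f l = true.
Proof.
  induction k; simpl; split.
  - discriminate.
  - intros [l [H _]]; lia.
  - intros H. apply Bool.orb_true_iff in H. destruct H as [H|H].
    + apply IHk in H. destruct H as [l [Hl Hf]]. exists l; split; [lia|auto].
    + exists k; split; [lia|auto].
  - intros [l [Hl Hf]]. apply Bool.orb_true_iff.
    destruct (Nat.eq_dec l k) as [->|]. right; auto. left; apply IHk; exists l; split; [lia|auto].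
Qed.

Fixpoint selF (adj : nat -> nat -> bool) (m : nat) : nat -> bool :=
  match m with
  | O => fun _ => false
  | S k => fun j => if Nat.eqb j k
           then negb (existsb_lt k (fun l => andb (adj k l) (selF adj k l)))
           else selF adj k j
  end.

Definition sel adj j := selF adj (S j) j.

Lemma selF_stable adj m j : (j < m)%nat -> selF adj m j = sel adj j.
Proof.
  induction m; intros H; [lia|]. simpl.
  destruct (Nat.eqb_spec j m) as [->|Hne].
  - unfold sel; simpl. rewrite Nat.eqb_refl. reflexivity.
  - apply IHm; lia.
Qed.

Lemma sel_eq adj j : sel adj j = negb (existsb_lt j (fun l => andb (adj j l) (sel adj l))).
Proof.
  unfold sel at 1; simpl. rewrite Nat.eqb_refl. f_equal.
  assert (forall k, (k <= j)%nat -> existsb_lt k (fun l => andb (adj j l) (selF adj j l)) =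
     existsb_lt k (fun l => andb (adj j l) (sel adj l))).
  { induction k; intros Hk; simpl; auto. rewrite IHk by lia. rewrite selF_stable by lia. reflexivity. }
  apply H; lia.
Qed.

Definition misx adj (j : nat) : R := if sel adj j then 1 else 0.

Lemma mis_inX n adj : simple_graph n adj -> in_X n adj (misx adj).
Proof.
  intros [Hsym Hirr] i Hi.
  rewrite cns_split by auto.
  assert (Hx : forall j, 0 <= misx adj j <= 1) by (intros j; unfold misx; destruct (sel adj j); lra).
  destruct (sel adj i) eqn:Si.
  -
    assert (Hns : nsum n adj (misx adj) i = 0).
    { unfold nsum. transitivity (Rsum n (fun _ => 0)).
      - apply Rsum_ext. intros j Hj. destruct (adj i j) eqn:Aij; [|reflexivity].
        unfold misx. destruct (sel adj j) eqn:Sj; [|reflexivity]. exfalso.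
        destruct (Nat.lt_total j i) as [Hlt|[Heq|Hgt]].
        + rewrite sel_eq in Si. apply Bool.negb_true_iff in Si.
          assert (existsb_lt i (fun l => andb (adj i l) (sel adj l)) = true).
          { apply existsb_lt_spec. exists j. rewrite Aij, Sj. auto. }
          congruence.
        + subst. rewrite Hirr in Aij by auto. discriminate.
        + rewrite sel_eq in Sj. apply Bool.negb_true_iff in Sj.
          assert (existsb_lt j (fun l => andb (adj j l) (sel adj l)) = true).
          { apply existsb_lt_spec. exists i. rewrite Hsym by auto. rewrite Aij, Si. auto. }
          congruence.
      - clear. induction n; simpl; lra. }
    rewrite Hns. unfold misx at 1 2 3 4. rewrite Si. split; [lra|]. split; lra.
  - assert (Hx0 : misx adj i = 0) by (unfold misx; rewrite Si; auto).
    rewrite Hx0. split; [lra|]. split; [|auto].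
    rewrite sel_eq in Si. apply Bool.negb_false_iff in Si. apply existsb_lt_spec in Si.
    destruct Si as [l [Hl Hal]]. apply Bool.andb_true_iff in Hal. destruct Hal as [Hal Hsl].
    assert (1 <= nsum n adj (misx adj) i).
    { unfold nsum. apply Rle_trans with (if adj i l then misx adj l else 0).
      - rewrite Hal. unfold misx. rewrite Hsl. lra.
      - apply (Rsum_ge_term n (fun j => if adj i j then misx adj j else 0)); [|lia].
        intros j _. destruct (adj i j); [apply Hx|lra]. }
    lra.
Qed.


Lemma nsum_scal n (adj : nat -> nat -> bool) (x : nat -> R) i L :
  Rsum n (fun j => if adj i j then x j * L else 0) = nsum n adj x i * L.
Proof.
  unfold nsum. rewrite Rmult_comm, <- Rsum_scal. apply Rsum_ext. intros j _.
  destruct (adj i j); ring.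
Qed.

Lemma mul_neg_neg a b : a < 0 -> b < 0 -> 0 < a * b.
Proof. intros; nra. Qed.
Lemma mul_pos_neg a b : 0 < a -> b < 0 -> a * b < 0.
Proof. intros; nra. Qed.
Lemma mul_nn_neg a b : 0 <= a -> b < 0 -> a * b <= 0.
Proof. intros; nra. Qed.

Lemma exp_le1 a : a <= 0 -> exp a <= 1.
Proof. intros [H|H]. rewrite <- exp_0. left; apply exp_increasing; auto. rewrite H, exp_0; lra. Qed.
Lemma exp_gt1 a : 0 < a -> 1 < exp a.
Proof. intros H. rewrite <- exp_0. apply exp_increasing; auto. Qed.

Lemma forward n adj p x : simple_graph n adj -> 0 < p < 1 -> in_X n adj x ->
  exists T, is_equilibrium n adj (fun _ => p) T /\
    revenue n (fun _ => p) T <= p * ln (/ p) * Rsum n x.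
Proof.
  intros [Hsym Hirr] Hp HX.
  set (L := ln p).
  assert (HL : L < 0) by (unfold L; rewrite <- ln_1; apply ln_increasing; lra).
  assert (HpL : exp L = p) by (unfold L; apply exp_ln; lra).
  exists (fun j => Fin (exp ((1 - nsum n adj x j) * L))).
  assert (HF : forall j, (j < n)%nat -> Fext (Fin (exp ((1 - nsum n adj x j) * L))) = exp (x j * L)).
  { intros j Hj. simpl. unfold Fu. destruct (HX j Hj) as [Hb [Hge Hgt]].
    rewrite cns_split in Hge, Hgt by auto.
    destruct (Rlt_or_le 1 (x j + nsum n adj x j)) as [Hlt|Hle].
    - pose proof (Hgt Hlt) as H0. rewrite H0 in *. rewrite Rmult_0_l, exp_0.
      assert (1 < exp ((1 - nsum n adj x j) * L)).
      { apply exp_gt1. apply mul_neg_neg; lra. }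
      rewrite Rmin_left by lra. apply Rmax_right; lra.
    - assert (E : 1 - nsum n adj x j = x j) by lra. rewrite E.
      assert (exp (x j * L) <= 1).
      { apply exp_le1. apply mul_nn_neg; lra. }
      pose proof (exp_pos (x j * L)).
      rewrite Rmin_right by lra. apply Rmax_right; lra. }
  assert (Hd : forall i, (i < n)%nat ->
     Rprod_if n (adj i) (fun j => Fext (Fin (exp ((1 - nsum n adj x j) * L)))) = exp (nsum n adj x i * L)).
  { intros i Hi. rewrite (Rprod_ext n (adj i) _ (fun j => exp (x j * L))) by auto.
    rewrite Rprod_exp, nsum_scal. reflexivity. }
  split.
  - intros i Hi. split; [simpl; left; apply exp_pos|].
    simpl. rewrite Hd by auto. right. split; [apply exp_neq_0|].
    f_equal. rewrite <- HpL at 1. unfold Rdiv. rewrite <- exp_Ropp, <- exp_plus. f_equal. ring.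
  - unfold revenue.
    rewrite ln_Rinv by lra. fold L.
    rewrite Rmult_assoc, <- Rsum_scal, <- Rsum_scal. apply Rsum_le. intros i Hi.
    rewrite HF by auto. pose proof (exp_ineq1_le (x i * L)).
    apply Rmult_le_compat_l; lra.
Qed.

Lemma Fext_bounds t : 0 <= Fext t <= 1.
Proof.
  destruct t; simpl; [|lra]. unfold Fu. split.
  - apply Rmax_l.
  - apply Rmax_lub; [lra|apply Rmin_l].
Qed.

Lemma backward n adj p T : simple_graph n adj -> 0 < p < 1 ->
  is_equilibrium n adj (fun _ => p) T ->
  exists x, in_X n adj x /\ p * (1 - p) * Rsum n x <= revenue n (fun _ => p) T.
Proof.
  intros [Hsym Hirr] Hp HT.
  set (L := ln p).
  assert (HL : L < 0) by (unfold L; rewrite <- ln_1; apply ln_increasing; lra).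
  assert (HpL : exp L = p) by (unfold L; apply exp_ln; lra).
  set (y := fun j => Fext (T j)).
  assert (Hy1 : forall j, 0 <= y j <= 1) by (intros; apply Fext_bounds).
  assert (Hdb : forall i, 0 <= Rprod_if n (adj i) y <= 1) by (intros; apply Rprod_bounds; auto).
  assert (Hypos : forall j, (j < n)%nat -> 0 < y j).
  { intros j Hj. destruct (HT j Hj) as [_ [[Hd0 HTj]|[Hd0 HTj]]]; unfold y; rewrite HTj; simpl; [lra|].
    fold y in Hd0. pose proof (Hdb j).
    assert (0 < p / Rprod_if n (adj j) y).
    { unfold Rdiv. apply Rmult_lt_0_compat; [lra|apply Rinv_0_lt_compat; lra]. }
    unfold Fu. apply Rlt_le_trans with (Rmin 1 (p / Rprod_if n (adj j) y)); [|apply Rmax_r].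
    unfold Rmin. destruct (Rle_dec 1 _); lra. }
  set (x := fun j => ln (y j) / L).
  assert (Hexpx : forall j, (j < n)%nat -> exp (x j * L) = y j).
  { intros j Hj. unfold x. replace (ln (y j) / L * L) with (ln (y j)) by (field; lra).
    apply exp_ln; auto. }
  assert (Hx0 : forall j, (j < n)%nat -> 0 <= x j).
  { intros j Hj. unfold x, Rdiv. assert (ln (y j) <= 0).
    { destruct (Hy1 j) as [_ [Hlt|Heq]]. left. rewrite <- ln_1. apply ln_increasing; auto.
      rewrite Heq, ln_1; lra. }
    assert (/ L < 0) by (apply Rinv_lt_0_compat; auto). assert (0 <= - ln (y j)) by lra. assert (0 < - / L) by lra. replace (ln (y j) * / L) with ((- ln (y j)) * (- / L)) by ring. apply Rmult_le_pos; lra. }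
  assert (Hd : forall i, (i < n)%nat -> Rprod_if n (adj i) y = exp (nsum n adj x i * L)).
  { intros i Hi. rewrite (Rprod_ext n (adj i) y (fun j => exp (x j * L))) by (intros; symmetry; auto).
    rewrite Rprod_exp, nsum_scal. reflexivity. }
  assert (Hyi : forall i, (i < n)%nat -> y i = Fu (exp ((1 - nsum n adj x i) * L))).
  { intros i Hi. destruct (HT i Hi) as [_ [[Hd0 HTj]|[Hd0 HTj]]].
    - exfalso. fold y in Hd0. rewrite Hd in Hd0 by auto. apply (exp_neq_0 _ Hd0).
    - unfold y at 1. rewrite HTj. simpl. fold y. rewrite Hd by auto. f_equal.
      rewrite <- HpL at 1. unfold Rdiv. rewrite <- exp_Ropp, <- exp_plus. f_equal. ring. }
  assert (Hns0 : forall i, 0 <= nsum n adj x i) by (intros; apply nsum_nonneg; auto).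
  exists x. split.
  - intros i Hi. rewrite cns_split by auto. pose proof (Hns0 i).
    pose proof (Hyi i Hi) as Hyi'. unfold Fu in Hyi'.
    destruct (Rle_or_lt (nsum n adj x i) 1) as [Hle|Hlt].
    + assert (Hr : exp ((1 - nsum n adj x i) * L) <= 1).
      { apply exp_le1. apply mul_nn_neg; lra. }
      pose proof (exp_pos ((1 - nsum n adj x i) * L)).
      rewrite Rmin_right, Rmax_right in Hyi' by lra.
      rewrite <- (Hexpx i Hi) in Hyi'. apply exp_inv in Hyi'.
      assert (x i = 1 - nsum n adj x i) by (apply Rmult_eq_reg_r with L; lra).
      split; [split; [apply Hx0; auto|lra]|]. split; lra.
    + assert (Hr : 1 < exp ((1 - nsum n adj x i) * L)).
      { apply exp_gt1. apply mul_neg_neg; lra. }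
      rewrite Rmin_left, Rmax_right in Hyi' by lra.
      assert (Hxi : x i = 0) by (unfold x; rewrite Hyi', ln_1; unfold Rdiv; ring).
      rewrite Hxi. split; [lra|]. split; intros; lra.
  - unfold revenue. rewrite Rmult_assoc, <- Rsum_scal, <- Rsum_scal.
    apply Rsum_le. intros i Hi. apply Rmult_le_compat_l; [lra|].
    fold (y i). rewrite <- (Hexpx i Hi).
    assert (Hxi1 : x i <= 1).
    { pose proof (Hns0 i). pose proof (Hyi i Hi) as Hyi'. unfold Fu in Hyi'.
      destruct (Rle_or_lt (nsum n adj x i) 1) as [Hle|Hlt].
      - assert (exp ((1 - nsum n adj x i) * L) <= 1).
        { apply exp_le1. apply mul_nn_neg; lra. }
        pose proof (exp_pos ((1 - nsum n adj x i) * L)).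
        rewrite Rmin_right, Rmax_right in Hyi' by lra.
        rewrite <- (Hexpx i Hi) in Hyi'. apply exp_inv in Hyi'.
        assert (x i = 1 - nsum n adj x i) by (apply Rmult_eq_reg_r with L; lra). lra.
      - assert (1 < exp ((1 - nsum n adj x i) * L)) by (apply exp_gt1; apply mul_neg_neg; lra).
        rewrite Rmin_left, Rmax_right in Hyi' by lra.
        unfold x; rewrite Hyi', ln_1; unfold Rdiv; lra. }
    pose proof (chord (x i) L (conj (Hx0 i Hi) Hxi1)). rewrite HpL in H. nra.
Qed.


Definition Cset n adj (x : nat -> R) : Prop :=
  (forall i, 0 <= x i /\ x i <= 1) /\
  (forall i, (i < n)%nat -> 1 <= closed_nbhd_sum n adj x i /\
      x i * (closed_nbhd_sum n adj x i - 1) = 0).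

Lemma Cset_inX n adj x : Cset n adj x -> in_X n adj x.
Proof.
  intros [Hb Hc] i Hi. destruct (Hc i Hi) as [H1 H2]. split; [apply Hb|]. split; [lra|].
  intros Hgt. apply Rmult_integral in H2. destruct H2; [auto|lra].
Qed.

Lemma inX_Cset n adj x : in_X n adj x -> (forall i, 0 <= x i /\ x i <= 1) -> Cset n adj x.
Proof.
  intros HX Hb. split; auto. intros i Hi. destruct (HX i Hi) as [_ [H1 H2]]. split; [lra|].
  destruct (Rlt_or_le 1 (closed_nbhd_sum n adj x i)) as [H|H].
  - rewrite (H2 H); ring.
  - replace (closed_nbhd_sum n adj x i - 1) with 0 by lra; ring.
Qed.

Lemma inX_trunc n adj x : in_X n adj x ->
  exists y, Cset n adj y /\ Rsum n y = Rsum n x.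
Proof.
  intros HX. exists (fun j => if Nat.ltb j n then x j else 0).
  assert (Hcs : forall i, closed_nbhd_sum n adj (fun j => if Nat.ltb j n then x j else 0) i =
                          closed_nbhd_sum n adj x i).
  { intros i. unfold closed_nbhd_sum. apply Rsum_ext. intros j Hj.
    destruct (Nat.ltb_spec j n); [reflexivity|lia]. }
  split.
  - apply inX_Cset.
    + intros i Hi. rewrite Hcs. destruct (HX i Hi) as [Hb [H1 H2]].
      destruct (Nat.ltb_spec i n); [|lia]. split; [auto|]. split; auto.
    + intros i. destruct (Nat.ltb_spec i n); [apply (HX i); auto|lra].
  - apply Rsum_ext. intros j Hj. destruct (Nat.ltb_spec j n); [reflexivity|lia].
Qed.

Lemma mis_Cset n adj : simple_graph n adj -> Cset n adj (misx adj).
Proof.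
  intros G. apply inX_Cset. apply mis_inX; auto.
  intros i; unfold misx; destruct (sel adj i); lra.
Qed.

From mathcomp Require all_boot all_order all_algebra all_classical all_reals all_analysis Rstruct Rstruct_topology.

Module Topo.
From mathcomp Require Import all_boot all_order all_algebra.
From mathcomp Require Import all_classical all_reals all_analysis.
From mathcomp Require Import Rstruct Rstruct_topology.
Import Order.TTheory GRing.Theory Num.Theory.
Local Open Scope classical_set_scope.

Lemma Rsum_cont (n : nat) (F : nat -> {ptws nat -> R} -> R^o) :
  (forall j, continuous (F j)) -> continuous (fun x => (Rsum n (fun j => F j x) : R^o)).
Proof.
move=> HF; elim: n => [|k IH] /=.
  exact: cst_continuous.
move=> x; have := continuousD (IH x) (HF k x). by [].
Qed.

Lemma proj_cont (i : nat) : continuous (fun x : {ptws nat -> R} => (x i : R^o)).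
Proof. exact: (@proj_continuous nat (fun _ => R) i). Qed.

Lemma min_exists (n : nat) (C : set {ptws nat -> R}) :
  C !=set0 -> (forall x, C x -> forall i, Rle 0 (x i) /\ Rle (x i) 1) -> closed C ->
  exists x, C x /\ forall y, C y -> Rle (Rsum n x) (Rsum n y).
Proof.
move=> C0 Cb Ccl.
have cbox : compact [set f : {ptws nat -> R} | forall i, `[0%R, 1%R] (f i)].
  apply: (@tychonoff nat (fun _ => R) (fun _ => `[0%R, 1%R])) => i.
  exact: segment_compact.
have cC : compact C.
  apply: (subclosed_compact Ccl cbox) => x Cx i /=.
  have [h1 h2] := Cb x Cx i.
  by rewrite in_itv /=; apply/andP; split; apply/RleP.
have cf : {within C, continuous (fun x : {ptws nat -> R} => (Rsum n x : R^o))}.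
  apply: continuous_subspaceT.
  exact: (Rsum_cont n (fun j x => x j) (fun j => proj_cont j)).
have [c cC' cmin] := compact_EVT_min C0 cC cf.
exists c; split; first by rewrite inE in cC'.
move=> y Cy; apply/RleP; apply: cmin; by rewrite inE.
Qed.

Lemma closed_Rle_l (f : {ptws nat -> R} -> R^o) (a : R) : continuous f ->
  closed [set x | Rle a (f x)].
Proof.
move=> cf.
have -> : [set x | Rle a (f x)] = f @^-1` [set r : R^o | (a <= r)%R].
  by apply/seteqP; split => x /= /RleP.
apply: preimage_closed; first by move=> x _; exact: cf.
exact: closed_ge.
Qed.

Lemma closed_Rle_r (f : {ptws nat -> R} -> R^o) (a : R) : continuous f ->
  closed [set x | Rle (f x) a].
Proof.
move=> cf.
have -> : [set x | Rle (f x) a] = f @^-1` [set r : R^o | (r <= a)%R].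
  by apply/seteqP; split => x /= /RleP.
apply: preimage_closed; first by move=> x _; exact: cf.
exact: closed_le.
Qed.

Lemma closed_Req (f : {ptws nat -> R} -> R^o) (a : R) : continuous f ->
  closed [set x | f x = a].
Proof.
move=> cf.
have -> : [set x | f x = a] = f @^-1` [set r : R^o | r = a].
  by [].
apply: preimage_closed; first by move=> x _; exact: cf.
exact: closed_eq.
Qed.

Lemma cns_cont n adj i :
  continuous (fun x : {ptws nat -> R} => (closed_nbhd_sum n adj x i : R^o)).
Proof.
apply: (Rsum_cont n (fun j x => if (adj i j || Nat.eqb j i)%bool then x j else 0%R)).
move=> j; case: (adj i j || Nat.eqb j i)%bool.
  exact: proj_cont.
exact: cst_continuous.
Qed.

Lemma Cset_closed n adj : closed (Cset n adj : set {ptws nat -> R}).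
Proof.
have -> : (Cset n adj : set {ptws nat -> R}) =
  (\bigcap_(i in setT) ([set x | Rle 0 (x i)] `&` [set x | Rle (x i) 1])) `&`
  (\bigcap_(i in [set i | lt i n]) ([set x | Rle 1 (closed_nbhd_sum n adj x i)] `&`
      [set x | Rmult (x i) (Rminus (closed_nbhd_sum n adj x i) 1) = 0])).
  apply/seteqP; split => x /=.
    move=> [Hb Hc]; split.
      by move=> i _; have [? ?] := Hb i; split.
    by move=> i Hi; have [? ?] := Hc i Hi; split.
  move=> [Hb Hc]; split.
    by move=> i; have [? ?] := Hb i I; split.
  by move=> i Hi; have [? ?] := Hc i Hi; split.
apply: closedI; apply: closed_bigI => i _; apply: closedI.
- exact: closed_Rle_l (proj_cont i).
- exact: closed_Rle_r (proj_cont i).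
- exact: closed_Rle_l (cns_cont n adj i).
- apply: closed_Req.
  move=> x; have := continuousM (proj_cont i x)
     (continuousB (cns_cont n adj i x) (@cst_continuous _ R^o 1%R x)).
  by [].
Qed.

End Topo.

Theorem mainTheorem13 (n : nat) (adj : nat -> nat -> bool) (p : R) :
  simple_graph n adj -> 0 < p < 1 ->
  exists x : nat -> R,
    in_X n adj x /\
    (forall y : nat -> R, in_X n adj y -> Rsum n x <= Rsum n y) /\
    (* lower bound: p(1-p) min <= R(p1,T) for every equilibrium T *)
    (forall T : nat -> ext, is_equilibrium n adj (fun _ => p) T ->
       p * (1 - p) * Rsum n x <= revenue n (fun _ => p) T) /\
    (* upper bound: inf over equilibria <= p log(1/p) min *)
    (forall eps : R, 0 < eps ->
       exists T : nat -> ext, is_equilibrium n adj (fun _ => p) T /\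
         revenue n (fun _ => p) T <= p * ln (/ p) * Rsum n x + eps).
Proof.
  intros G Hp.
  destruct (Topo.min_exists n (Cset n adj)) as [x [Cx Hmin]].
  - exists (misx adj). apply mis_Cset; auto.
  - intros x Cx. apply (proj1 Cx).
  - apply Topo.Cset_closed.
  - assert (Hmin' : forall y, in_X n adj y -> Rsum n x <= Rsum n y).
    { intros y Hy. destruct (inX_trunc n adj y Hy) as [y' [Cy' Hs]]. rewrite <- Hs. apply Hmin; auto. }
    exists x. split; [apply Cset_inX; auto|]. split; [auto|]. split.
    + intros T HT. destruct (backward n adj p T G Hp HT) as [x' [Hx' Hle]].
      pose proof (Hmin' x' Hx').
      assert (0 <= p * (1 - p)) by (apply Rmult_le_pos; lra).
      apply Rle_trans with (p * (1 - p) * Rsum n x'); [apply Rmult_le_compat_l; auto|auto].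
    + intros eps Heps. destruct (forward n adj p x G Hp (Cset_inX n adj x Cx)) as [T [HT Hle]].
      exists T. split; auto. lra.
Qed.
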